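(* Let $0<T<\infty$ and let $C(\cdot,t)$, $t\in[0,T)$, be a smooth family of closed curves in $\mathbb{R}^2$ with centro-affine arc-length $\xi$ and centro-affine curvature $\varphi$, evolving by the flow $$\frac{\partial C(p,t)}{\partial t}=\Big(\lambda+\int_0^{\xi(p)}\varphi\,d\xi\Big)C+\frac{\varphi}{2}C_\xi$$ ($\lambda$ a real constant), so that $\varphi$ satisfies $\frac{\partial\varphi}{\partial t}=\frac12\varphi_{\xi\xi}-\frac12\varphi^3+2\varphi$ on $[0,T)$. Then for every integer $n\ge0$, $\frac{\partial^n\varphi}{\partial\xi^n}$ is bounded on $S^1\times[0,T)$.
   Context: For $u,v\in\mathbb{R}^2$, $[u,v]$ denotes the determinant of the matrix with columns $u,v$. Each curve $C(\cdot,t):S^1\to\mathbb{R}^2$ is smooth, closed, with $[C,C_p]\neq0$, $[C_p,C_{pp}]\neq0$ (then $[C_p,C_{pp}]/[C,C_p]>0$). The centro-affine metric is $g=\sqrt{[C_p,C_{pp}]/[C,C_p]}$, centro-affine arc-length $\xi(p)=\int_{p_0}^p g\,dp$ (so $\partial_\xi=g^{-1}\partial_p$), and centro-affine curvature $\varphi=[C_{\xi\xi},C]/[C_\xi,C]$. Under this flow $g_t/g=\frac12\varphi^2$. *)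

(* Defs.v *)
From Stdlib Require Import Reals List.
From Coquelicot Require Import Coquelicot.
Open Scope R_scope.

(* A time-dependent planar curve is given by its two coordinate functions
   X, Y : R -> R -> R, (p, t) |-> coordinates of C(p,t). *)

Definition dP (f : R -> R -> R) : R -> R -> R :=
  fun p t => Derive (fun q => f q t) p.
Definition dT (f : R -> R -> R) : R -> R -> R :=
  fun p t => Derive (fun s => f p s) t.

(* iterated mixed partial derivative along a word (true = t, false = p) *)
Fixpoint pder (w : list bool) (f : R -> R -> R) : R -> R -> R :=
  match w with
  | nil => f
  | cons b w' => (if b then dT else dP) (pder w' f)
  end.

Definition smooth_on (U : R -> R -> Prop) (f : R -> R -> R) : Prop :=
  forall (w : list bool) (p t : R), U p t ->
    ex_derive (fun q => pder w f q t) p /\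
    ex_derive (fun s => pder w f p s) t /\
    continuous (fun z : R * R => pder w f (fst z) (snd z)) (p, t).

Definition cross_C_Cp (X Y : R -> R -> R) : R -> R -> R :=
  fun p t => X p t * dP Y p t - Y p t * dP X p t.

Definition cross_Cp_Cpp (X Y : R -> R -> R) : R -> R -> R :=
  fun p t => dP X p t * dP (dP Y) p t - dP Y p t * dP (dP X) p t.

Definition ca_metric (X Y : R -> R -> R) : R -> R -> R :=
  fun p t => sqrt (cross_Cp_Cpp X Y p t / cross_C_Cp X Y p t).

Definition dxi (X Y : R -> R -> R) (f : R -> R -> R) : R -> R -> R :=
  fun p t => dP f p t / ca_metric X Y p t.

Definition dxi_n (X Y : R -> R -> R) (n : nat) (f : R -> R -> R) : R -> R -> R :=
  Nat.iter n (dxi X Y) f.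

Definition ca_curv (X Y : R -> R -> R) : R -> R -> R :=
  fun p t =>
    (dxi X Y (dxi X Y X) p t * Y p t - dxi X Y (dxi X Y Y) p t * X p t) /
    (dxi X Y X p t * Y p t - dxi X Y Y p t * X p t).

(* int_0^{xi(p)} phi dxi = int_0^p phi g dp  (arc-length based at p = 0) *)
Definition int_curv (X Y : R -> R -> R) : R -> R -> R :=
  fun p t => RInt (fun q => ca_curv X Y q t * ca_metric X Y q t) 0 p.

(* Main.v *)
Require Import Defs.
From Stdlib Require Import Reals Lra Psatz ZArith FunctionalExtensionality IndefiniteDescription Classical.
From Coquelicot Require Import Coquelicot.
Open Scope R_scope.

Definition cont2 (f : R -> R -> R) p t :=
  continuous (fun z : R * R => f (fst z) (snd z)) (p, t).

Lemma cont2_mult f g p t : cont2 f p t -> cont2 g p t ->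
  cont2 (fun p t => f p t * g p t) p t.
Proof. intros H1 H2. exact (continuous_mult _ _ _ H1 H2). Qed.

Lemma cont2_plus f g p t : cont2 f p t -> cont2 g p t ->
  cont2 (fun p t => f p t + g p t) p t.
Proof. intros H1 H2. exact (continuous_plus _ _ _ H1 H2). Qed.

Lemma cont2_opp f p t : cont2 f p t -> cont2 (fun p t => - f p t) p t.
Proof. intros H1. exact (continuous_opp _ _ H1). Qed.

Lemma cont2_minus f g p t : cont2 f p t -> cont2 g p t ->
  cont2 (fun p t => f p t - g p t) p t.
Proof. intros H1 H2. apply cont2_plus; auto. apply cont2_opp; auto. Qed.

Lemma cont2_const c p t : cont2 (fun _ _ => c) p t.
Proof. apply continuous_const. Qed.

Lemma cont2_inv f p t : cont2 f p t -> f p t <> 0 -> cont2 (fun p t => / f p t) p t.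
Proof. intros H1 H2. unfold cont2.
  apply (continuous_comp (fun z : R*R => f (fst z) (snd z)) (fun x => / x)); auto.
  apply continuous_Rinv; auto. Qed.

Lemma cont2_sqrt f p t : cont2 f p t -> 0 < f p t -> cont2 (fun p t => sqrt (f p t)) p t.
Proof. intros H1 H2. unfold cont2.
  apply (continuous_comp (fun z : R*R => f (fst z) (snd z)) sqrt); auto.
  apply continuity_pt_filterlim. apply continuity_pt_sqrt. simpl. lra. Qed.

Lemma cont2_p f p t : cont2 f p t -> continuity_pt (fun q => f q t) p.
Proof. intros H. apply continuity_pt_filterlim.
  apply (continuous_comp_2 (fun q : R => q) (fun _ : R => t) f p); auto.
  apply continuous_id. apply continuous_const. Qed.

Lemma cont2_t f p t : cont2 f p t -> continuity_pt (fun s => f p s) t.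
Proof. intros H. apply continuity_pt_filterlim.
  apply (continuous_comp_2 (fun _ : R => p) (fun s : R => s) f t); auto.
  apply continuous_const. apply continuous_id. Qed.

Lemma loc2_of (P : R -> R -> Prop) p t :
  locally (p, t) (fun z : R * R => P (fst z) (snd z)) -> locally_2d P p t.
Proof. intros H. apply (proj2 (locally_2d_locally P p t)). exact H. Qed.

Lemma loc_of2 (P : R -> R -> Prop) p t :
  locally_2d P p t -> locally (p, t) (fun z : R * R => P (fst z) (snd z)).
Proof. intros H. apply (proj1 (locally_2d_locally P p t)). exact H. Qed.

Lemma cont2_ext f g p t : locally (p, t) (fun z : R * R => f (fst z) (snd z) = g (fst z) (snd z)) ->
  cont2 f p t -> cont2 g p t.
Proof. intros H1 H2. unfold cont2, continuous.
  assert (E : g p t = f p t).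
  { apply (loc2_of (fun u v => f u v = g u v)) in H1. destruct H1 as [d Hd]. symmetry. apply Hd;
    rewrite Rminus_eq_0, Rabs_R0; apply cond_pos. }
  simpl. rewrite E. eapply filterlim_ext_loc. exact H1. exact H2. Qed.

Lemma cont2_pos f p t : cont2 f p t -> 0 < f p t ->
  locally (p, t) (fun z : R * R => 0 < f (fst z) (snd z)).
Proof. intros H1 H2. unfold cont2, continuous in H1.
  apply H1. simpl. exists (mkposreal _ H2). intros y Hy. simpl in Hy.
  unfold ball in Hy; simpl in Hy. unfold AbsRing_ball, abs, minus, plus, opp in Hy; simpl in Hy.
  apply Rabs_def2 in Hy. lra. Qed.

Definition open2 (U : R -> R -> Prop) := forall p t, U p t -> locally_2d U p t.

Fixpoint Ck (U : R -> R -> Prop) (k : nat) (f : R -> R -> R) : Prop :=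
  match k with
  | O => forall p t, U p t -> cont2 f p t
  | S k' => (forall p t, U p t -> cont2 f p t /\ ex_derive (fun q => f q t) p
                                   /\ ex_derive (fun s => f p s) t)
            /\ Ck U k' (dP f) /\ Ck U k' (dT f)
  end.

Definition Sm U f := forall k, Ck U k f.

Lemma Ck_cont U k f p t : Ck U k f -> U p t -> cont2 f p t.
Proof. destruct k; simpl; intros H Hu. auto. apply (proj1 H); auto. Qed.

Lemma Ck_mono U k f : Ck U (S k) f -> Ck U k f.
Proof. revert f; induction k; intros f H.
  - simpl. intros p t Hu. apply (proj1 H); auto.
  - destruct H as [H1 [H2 H3]]. split; [exact H1|split; apply IHk; auto]. Qed.

Lemma loc_p (U : R -> R -> Prop) p t : locally_2d U p t -> locally p (fun q => U q t).
Proof. intros [d Hd]. exists d. intros y Hy. apply Hd. exact Hy.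
  rewrite Rminus_eq_0, Rabs_R0; apply cond_pos. Qed.

Lemma loc_t (U : R -> R -> Prop) p t : locally_2d U p t -> locally t (fun s => U p s).
Proof. intros [d Hd]. exists d. intros y Hy. apply Hd.
  rewrite Rminus_eq_0, Rabs_R0; apply cond_pos. exact Hy. Qed.

Lemma Ck_ext U k f g : open2 U -> (forall p t, U p t -> f p t = g p t) -> Ck U k f -> Ck U k g.
Proof. intros HU. revert f g; induction k; intros f g E H.
  - simpl in *. intros p t Hu. apply (cont2_ext f). 2: auto.
    apply (loc_of2 (fun u v => f u v = g u v)). destruct (HU p t Hu) as [d Hd]. exists d. intros. apply E, Hd; auto.
  - destruct H as [H1 [H2 H3]]. split; [|split].
    + intros p t Hu. destruct (H1 p t Hu) as [A [B C]]. split; [|split].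
      * apply (cont2_ext f); auto. apply (loc_of2 (fun u v => f u v = g u v)). destruct (HU p t Hu) as [d Hd].
        exists d. intros. apply E, Hd; auto.
      * eapply ex_derive_ext_loc; [|exact B]. generalize (loc_p U p t (HU p t Hu)).
        apply filter_imp. intros q Hq. apply E; auto.
      * eapply ex_derive_ext_loc; [|exact C]. generalize (loc_t U p t (HU p t Hu)).
        apply filter_imp. intros q Hq. apply E; auto.
    + apply (IHk (dP f)); auto. intros p t Hu. unfold dP. apply Derive_ext_loc.
      generalize (loc_p U p t (HU p t Hu)). apply filter_imp. intros q Hq. apply E; auto.
    + apply (IHk (dT f)); auto. intros p t Hu. unfold dT. apply Derive_ext_loc.
      generalize (loc_t U p t (HU p t Hu)). apply filter_imp. intros q Hq. apply E; auto.
Qed.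



Lemma Ck_const U k c : Ck U k (fun _ _ => c).
Proof. revert c; induction k; intros c; simpl.
  - intros. apply cont2_const.
  - split; [|split].
    + intros. split; [apply cont2_const|split; apply ex_derive_const].
    + unfold dP. replace (fun p t : R => Derive (fun _ : R => c) p) with (fun _ _ : R => 0).
      apply IHk. apply FunctionalExtensionality.functional_extensionality; intro;
      apply FunctionalExtensionality.functional_extensionality; intro. rewrite Derive_const; auto.
    + unfold dT. replace (fun p t : R => Derive (fun _ : R => c) t) with (fun _ _ : R => 0).
      apply IHk. apply FunctionalExtensionality.functional_extensionality; intro;
      apply FunctionalExtensionality.functional_extensionality; intro. rewrite Derive_const; auto.
Qed.

Lemma Ck_plus U k f g : open2 U -> Ck U k f -> Ck U k g -> Ck U k (fun p t => f p t + g p t).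
Proof. intros HU. revert f g; induction k; intros f g Hf Hg.
  - simpl in *. intros. apply cont2_plus; auto.
  - destruct Hf as [F1 [F2 F3]], Hg as [G1 [G2 G3]]. split; [|split].
    + intros p t Hu. destruct (F1 p t Hu) as [A [B C]], (G1 p t Hu) as [A' [B' C']].
      split; [apply cont2_plus; auto|split; [apply (ex_derive_plus (fun q => f q t) (fun q => g q t))|apply (ex_derive_plus (fun s => f p s) (fun s => g p s))]; auto].
    + apply (Ck_ext U k (fun p t => dP f p t + dP g p t)); auto.
      intros p t Hu. destruct (F1 p t Hu) as [A [B C]], (G1 p t Hu) as [A' [B' C']].
      unfold dP. rewrite Derive_plus; auto.
    + apply (Ck_ext U k (fun p t => dT f p t + dT g p t)); auto.
      intros p t Hu. destruct (F1 p t Hu) as [A [B C]], (G1 p t Hu) as [A' [B' C']].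
      unfold dT. rewrite Derive_plus; auto.
Qed.

Lemma Ck_mult U k f g : open2 U -> Ck U k f -> Ck U k g -> Ck U k (fun p t => f p t * g p t).
Proof. intros HU. revert f g; induction k; intros f g Hf Hg.
  - simpl in *. intros. apply cont2_mult; auto.
  - assert (Hf' := Ck_mono _ _ _ Hf). assert (Hg' := Ck_mono _ _ _ Hg).
    destruct Hf as [F1 [F2 F3]], Hg as [G1 [G2 G3]]. split; [|split].
    + intros p t Hu. destruct (F1 p t Hu) as [A [B C]], (G1 p t Hu) as [A' [B' C']].
      split; [apply cont2_mult; auto|split; apply ex_derive_mult; auto].
    + apply (Ck_ext U k (fun p t => dP f p t * g p t + f p t * dP g p t)); auto.
      intros p t Hu. destruct (F1 p t Hu) as [A [B C]], (G1 p t Hu) as [A' [B' C']].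
      unfold dP. rewrite Derive_mult; auto.
      apply Ck_plus; auto.
    + apply (Ck_ext U k (fun p t => dT f p t * g p t + f p t * dT g p t)); auto.
      intros p t Hu. destruct (F1 p t Hu) as [A [B C]], (G1 p t Hu) as [A' [B' C']].
      unfold dT. rewrite Derive_mult; auto.
      apply Ck_plus; auto.
Qed.

Lemma Ck_opp U k f : open2 U -> Ck U k f -> Ck U k (fun p t => - f p t).
Proof. intros HU Hf. apply (Ck_ext U k (fun p t => (fun _ _ => -1) p t * f p t)); auto.
  intros; ring. apply Ck_mult; auto. apply Ck_const. Qed.

Lemma Ck_minus U k f g : open2 U -> Ck U k f -> Ck U k g -> Ck U k (fun p t => f p t - g p t).
Proof. intros HU Hf Hg. apply (Ck_plus U k f (fun p t => - g p t)); auto. apply Ck_opp; auto. Qed.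

Lemma Ck_inv U k f : open2 U -> (forall p t, U p t -> f p t <> 0) -> Ck U k f ->
  Ck U k (fun p t => / f p t).
Proof. intros HU Hnz. revert f Hnz; induction k; intros f Hnz Hf.
  - simpl in *. intros. apply cont2_inv; auto.
  - assert (Hf' := Ck_mono _ _ _ Hf). assert (IH' := IHk f Hnz Hf').
    destruct Hf as [F1 [F2 F3]]. split; [|split].
    + intros p t Hu. destruct (F1 p t Hu) as [A [B C]].
      split; [apply cont2_inv; auto|split; apply ex_derive_inv; auto].
    + apply (Ck_ext U k (fun p t => (fun _ _ => -1) p t * dP f p t * ((/ f p t) * (/ f p t)))); auto.
      intros p t Hu. destruct (F1 p t Hu) as [A [B C]].
      unfold dP. simpl. rewrite Derive_inv; auto. set (D := Derive _ p). change (-1 * D * (/ f p t * / f p t) = - D / (f p t ^ 2)). field. auto.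
      apply Ck_mult; auto. apply Ck_mult; auto. apply Ck_const. apply Ck_mult; auto.
    + apply (Ck_ext U k (fun p t => (fun _ _ => -1) p t * dT f p t * ((/ f p t) * (/ f p t)))); auto.
      intros p t Hu. destruct (F1 p t Hu) as [A [B C]].
      unfold dT. simpl. rewrite Derive_inv; auto. set (D := Derive _ t). change (-1 * D * (/ f p t * / f p t) = - D / (f p t ^ 2)). field. auto.
      apply Ck_mult; auto. apply Ck_mult; auto. apply Ck_const. apply Ck_mult; auto.
Qed.

Lemma Ck_div U k f g : open2 U -> (forall p t, U p t -> g p t <> 0) -> Ck U k f -> Ck U k g ->
  Ck U k (fun p t => f p t / g p t).
Proof. intros. apply (Ck_mult U k f (fun p t => / g p t)); auto. apply Ck_inv; auto. Qed.

Lemma Ck_sqrt U k f : open2 U -> (forall p t, U p t -> 0 < f p t) -> Ck U k f ->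
  Ck U k (fun p t => sqrt (f p t)).
Proof. intros HU Hnz. revert f Hnz; induction k; intros f Hnz Hf.
  - simpl in *. intros. apply cont2_sqrt; auto.
  - assert (Hf' := Ck_mono _ _ _ Hf). assert (IH' := IHk f Hnz Hf').
    assert (Hs : Ck U k (fun p t => / ((fun _ _ => 2) p t * sqrt (f p t)))).
    { apply Ck_inv; auto. intros p t Hu. generalize (sqrt_lt_R0 _ (Hnz p t Hu)). lra.
      apply Ck_mult; auto. apply Ck_const. }
    destruct Hf as [F1 [F2 F3]]. split; [|split].
    + intros p t Hu. destruct (F1 p t Hu) as [A [B C]].
      split; [apply cont2_sqrt; auto|split].
      * eexists. apply (is_derive_sqrt (fun q => f q t)). apply Derive_correct; auto. auto.
      * eexists. apply (is_derive_sqrt (fun s => f p s)). apply Derive_correct; auto. auto.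
    + apply (Ck_ext U k (fun p t => dP f p t * / ((fun _ _ => 2) p t * sqrt (f p t)))); auto.
      intros p t Hu. destruct (F1 p t Hu) as [A [B C]].
      unfold dP. symmetry. apply is_derive_unique. cbv beta. apply (is_derive_sqrt (fun q => f q t)). apply Derive_correct; auto. auto.
      apply Ck_mult; auto.
    + apply (Ck_ext U k (fun p t => dT f p t * / ((fun _ _ => 2) p t * sqrt (f p t)))); auto.
      intros p t Hu. destruct (F1 p t Hu) as [A [B C]].
      unfold dT. symmetry. apply is_derive_unique. cbv beta. apply (is_derive_sqrt (fun s => f p s)). apply Derive_correct; auto. auto.
      apply Ck_mult; auto.
Qed.

Lemma Ck_set U V k f : (forall p t, U p t -> V p t) -> Ck V k f -> Ck U k f.
Proof. intros HUV. revert f; induction k; intros f H; simpl in *.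
  - intros; auto.
  - destruct H as [H1 [H2 H3]]. split; [|split]; auto. Qed.

Lemma smooth_Ck U f : smooth_on U f -> forall k w, Ck U k (pder w f).
Proof. intros Hs k. induction k; intros w; simpl.
  - intros p t Hu. apply (Hs w p t Hu).
  - split; [|split].
    + intros p t Hu. destruct (Hs w p t Hu) as [A [B C]]. split; auto.
    + apply (IHk (cons false w)).
    + apply (IHk (cons true w)).
Qed.

Lemma Sm_dP U f : Sm U f -> Sm U (dP f).
Proof. intros H k. exact (proj1 (proj2 (H (S k)))). Qed.
Lemma Sm_dT U f : Sm U f -> Sm U (dT f).
Proof. intros H k. exact (proj2 (proj2 (H (S k)))). Qed.

Lemma Sm_pw U f p t : Sm U f -> U p t -> cont2 f p t /\ ex_derive (fun q => f q t) p
                                   /\ ex_derive (fun s => f p s) t.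
Proof. intros H Hu. exact (proj1 (H 1%nat) p t Hu). Qed.

Lemma Schwarz_Sm U f p t : open2 U -> Sm U f -> U p t -> dT (dP f) p t = dP (dT f) p t.
Proof. intros HU Hf Hu. unfold dT, dP. symmetry.
  apply (Schwarz f p t).
  - destruct (HU p t Hu) as [d Hd]. exists d. intros u v H1 H2.
    assert (Hu' : U u v) by (apply Hd; auto).
    destruct (Sm_pw U f u v Hf Hu') as [_ [A B]].
    destruct (Sm_pw U (dT f) u v (Sm_dT _ _ Hf) Hu') as [_ [C _]].
    destruct (Sm_pw U (dP f) u v (Sm_dP _ _ Hf) Hu') as [_ [_ D]].
    repeat split; auto.
  - apply continuity_2d_pt_filterlim. apply (Ck_cont U 0 (dP (dT f))); auto.
    apply Sm_dP, Sm_dT; auto.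
  - apply continuity_2d_pt_filterlim. apply (Ck_cont U 0 (dT (dP f))); auto.
    apply Sm_dT, Sm_dP; auto.
Qed.

Definition per (u : R -> R -> R) := forall p t, u (p + 1) t = u p t.

Lemma per_Z u t z p : per u -> u (p + IZR z) t = u p t.
Proof. intros Hu. revert p. induction z using Z.peano_ind; intros p.
  - rewrite Rplus_0_r; auto.
  - rewrite succ_IZR. replace (p + (IZR z + 1)) with ((p + IZR z) + 1) by ring.
    rewrite Hu; auto.
  - rewrite <- Z.sub_1_r, minus_IZR. replace (p + (IZR z - 1)) with ((p - 1) + IZR z) by ring.
    rewrite IHz. replace p with ((p - 1) + 1) at 2 by ring. rewrite Hu; auto.
Qed.

Lemma per_red u p t : per u -> exists q, 0 <= q <= 1 /\ u p t = u q t.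
Proof. intros Hu. destruct (base_Int_part p) as [A B].
  exists (p - IZR (Int_part p)). split. lra.
  replace p with ((p - IZR (Int_part p)) + IZR (Int_part p)) at 1 by ring.
  apply per_Z; auto. Qed.

Lemma deriv_lim f x l : is_derive f x l -> forall eps, 0 < eps -> exists delta : posreal,
  forall h, h <> 0 -> Rabs h < delta -> Rabs ((f (x + h) - f x) / h - l) < eps.
Proof. intros H. apply is_derive_Reals in H. exact H. Qed.

Lemma max1d f df p d2 : (forall q, is_derive f q (df q)) -> is_derive df p d2 ->
  (forall q, f q <= f p) -> df p = 0 /\ d2 <= 0.
Proof. intros Hf Hd Hm.
  assert (E : df p = 0).
  { destruct (Rtotal_order (df p) 0) as [Hl|[Hl|Hl]]; auto; exfalso.
    - destruct (deriv_lim _ _ _ (Hf p) (- df p / 2)) as [d Hd']. lra.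
      set (h := - (d / 2)). assert (hn : h < 0) by (unfold h; generalize (cond_pos d); lra).
      assert (H1 := Hd' h ltac:(lra) ltac:(unfold h; rewrite Rabs_Ropp, Rabs_pos_eq; generalize (cond_pos d); lra)).
      apply Rabs_def2 in H1. destruct H1 as [H1 H2].
      set (Q := (f (p + h) - f p) / h) in *.
      assert (EQ : f (p + h) - f p = Q * h) by (unfold Q; field; lra).
      assert (Hm' := Hm (p + h)). nra.
    - destruct (deriv_lim _ _ _ (Hf p) (df p / 2)) as [d Hd']. lra.
      set (h := d / 2). assert (hn : 0 < h) by (unfold h; generalize (cond_pos d); lra).
      assert (H1 := Hd' h ltac:(lra) ltac:(unfold h; rewrite Rabs_pos_eq; generalize (cond_pos d); lra)).
      apply Rabs_def2 in H1. destruct H1 as [H1 H2].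
      set (Q := (f (p + h) - f p) / h) in *.
      assert (EQ : f (p + h) - f p = Q * h) by (unfold Q; field; lra).
      assert (Hm' := Hm (p + h)). nra. }
  split; auto.
  destruct (Rle_or_lt d2 0) as [Hl|Hl]; auto. exfalso.
  destruct (deriv_lim _ _ _ Hd (d2 / 2)) as [d Hd']. lra.
  set (h := d / 2). assert (hn : 0 < h) by (unfold h; generalize (cond_pos d); lra).
  destruct (MVT_cor2 f df p (p + h)) as [c [Ec Hc]]. lra.
  { intros c _. apply is_derive_Reals. auto. }
  assert (H1 := Hd' (c - p) ltac:(lra) ltac:(rewrite Rabs_pos_eq; unfold h in *; generalize (cond_pos d); lra)).
  replace (p + (c - p)) with c in H1 by ring. rewrite E in H1.
  apply Rabs_def2 in H1. destruct H1 as [H1 H2].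
  assert (Hpos : 0 < (df c - 0) / (c - p)) by lra.
  assert (Hdc : 0 < df c).
  { replace (df c) with (((df c - 0) / (c - p)) * (c - p)) by (field; lra).
    apply Rmult_lt_0_compat; lra. }
  assert (Hm' := Hm (p + h)). nra.
Qed.

Lemma cont2_ball f p t eps : cont2 f p t -> 0 < eps -> exists d : posreal,
  forall u v, Rabs (u - p) < d -> Rabs (v - t) < d -> Rabs (f u v - f p t) < eps.
Proof. intros H He. unfold cont2, continuous in H.
  assert (L : locally (p, t) (fun z : R * R => ball (f p t) (mkposreal _ He) (f (fst z) (snd z)))).
  { apply H. apply locally_ball. }
  apply (loc2_of (fun u v => ball (f p t) (mkposreal _ He) (f u v))) in L.
  destruct L as [d Hd]. exists d. intros u v H1 H2. generalize (Hd u v H1 H2).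
  unfold ball; simpl. unfold AbsRing_ball, abs, minus, plus, opp; simpl. auto. Qed.

Definition half (d : posreal) : posreal.
Proof. exists (d / 2). generalize (cond_pos d); lra. Defined.

Lemma unif_t w tau eta : 0 < eta -> (forall p, 0 <= p <= 1 -> cont2 w p tau) ->
  exists d, 0 < d /\ forall p, 0 <= p <= 1 -> forall s, Rabs (s - tau) < d ->
     Rabs (w p s - w p tau) < eta.
Proof. intros He Hc.
  assert (Hch : forall p, exists d : posreal, 0 <= p <= 1 -> forall u v, Rabs (u - p) < d ->
     Rabs (v - tau) < d -> Rabs (w u v - w p tau) < eta / 2).
  { intros p. destruct (Rle_dec 0 p) as [H1|H1]; [destruct (Rle_dec p 1) as [H2|H2]|].
    - destruct (cont2_ball w p tau (eta/2) (Hc p ltac:(lra)) ltac:(lra)) as [d Hd].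
      exists d. auto.
    - exists (mkposreal 1 Rlt_0_1). intros; lra.
    - exists (mkposreal 1 Rlt_0_1). intros; lra. }
  set (del := fun p => proj1_sig (constructive_indefinite_description _ (Hch p))).
  assert (Hdel : forall p, 0 <= p <= 1 -> forall u v, Rabs (u - p) < del p ->
     Rabs (v - tau) < del p -> Rabs (w u v - w p tau) < eta / 2).
  { intros p. exact (proj2_sig (constructive_indefinite_description _ (Hch p))). }
  destruct (compactness_value_1d 0 1 (fun p => half (del p))) as [d Hd].
  exists d. split. apply cond_pos.
  intros p Hp s Hs. apply Classical_Prop.NNPP. intros Hn. apply (Hd p Hp). intros [p0 [Hp0 [H1 H2]]].
  apply Hn. simpl in H1, H2.
  assert (Hpos := cond_pos (del p0)).
  assert (A1 := Hdel p0 Hp0 p s ltac:(lra) ltac:(lra)).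
  assert (A2 := Hdel p0 Hp0 p tau ltac:(lra) ltac:(rewrite Rminus_eq_0, Rabs_R0; lra)).
  apply Rabs_def2 in A1. apply Rabs_def2 in A2. apply Rabs_def1; lra.
Qed.

Lemma cont2_fun_t h p t : continuity_pt h t -> cont2 (fun _ s => h s) p t.
Proof. intros H. unfold cont2.
  apply (continuous_comp (fun z : R * R => snd z) h). apply continuous_snd.
  apply continuity_pt_filterlim. exact H. Qed.

Lemma exp_neg_le1 x : 0 <= x -> exp (- x) <= 1.
Proof. intros H. rewrite exp_Ropp. generalize (exp_ineq1_le x) (exp_pos x). intros.
  rewrite <- Rinv_1. apply Rinv_le_contravar; lra. Qed.

Lemma maxprin (T K M : R) (u : R -> R -> R) :
 0 < T -> 0 <= K -> 0 <= M ->
 (forall p t, 0 <= t < T -> cont2 u p t) -> per u ->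
 (forall p t, 0 < t < T -> ex_derive (fun s => u p s) t) ->
 (forall p t, 0 < t < T -> (forall q, u q t <= u p t) -> 0 <= u p t ->
    dT u p t <= K * u p t + M) ->
 exists B, forall p t, 0 <= t < T -> u p t <= B.
Proof. intros HT HK HM Hc Hper Hd Hmax.
  destruct (continuity_ab_maj (fun p => u p 0) 0 1) as [Mx [HMx _]]. lra.
  { intros c _. apply cont2_p. apply Hc. lra. }
  set (C0 := Rmax (u Mx 0) 0).
  assert (Hinit : forall p, u p 0 <= C0).
  { intros p. destruct (per_red u p 0 Hper) as [q [Hq E]]. rewrite E.
    unfold C0. generalize (HMx q Hq) (Rmax_l (u Mx 0) 0). lra. }
  assert (HC0 : 0 <= C0) by apply Rmax_r.
  set (w := fun p s => exp (- K * s) * u p s - (M + 1) * s - C0 - 1).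
  assert (wper : forall p s, exists q, 0 <= q <= 1 /\ w p s = w q s).
  { intros p s. destruct (per_red u p s Hper) as [q [Hq E]]. exists q. split; auto.
    unfold w. rewrite E. auto. }
  assert (wc : forall p s, 0 <= s < T -> cont2 w p s).
  { intros p s Hs. unfold w. apply cont2_minus. apply cont2_minus. apply cont2_minus.
    apply cont2_mult. apply (cont2_fun_t (fun s => exp (- K * s))).
    apply (proj2 (continuity_pt_filterlim _ _)). apply (ex_derive_continuous (fun s => exp (- K * s))). auto_derive. auto.
    apply Hc; auto.
    apply (cont2_fun_t (fun s => (M + 1) * s)).
    apply (proj2 (continuity_pt_filterlim _ _)). apply (ex_derive_continuous (fun s => (M + 1) * s)). auto_derive. auto.
    apply cont2_const. apply cont2_const. }
  assert (claim : forall t1, 0 <= t1 < T -> forall p, w p t1 < 0).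
  { intros t1 Ht1.
    set (G := fun s => 0 <= s <= t1 /\ forall r, 0 <= r <= s -> forall p, w p r < 0).
    assert (G0 : G 0).
    { split. lra. intros r Hr p. replace r with 0 by lra. unfold w.
      rewrite Rmult_0_r, exp_0. generalize (Hinit p). lra. }
    destruct (completeness G) as [tau [Hub Hlub]].
    { exists t1. intros s [Hs _]. lra. }
    { exists 0. auto. }
    assert (Htau0 : 0 <= tau) by (apply Hub; auto).
    assert (Htau1 : tau <= t1) by (apply Hlub; intros s [Hs _]; lra).
    assert (F1 : forall r, 0 <= r < tau -> forall p, w p r < 0).
    { intros r Hr p. apply Rnot_le_lt. intros Hw.
      assert (tau <= r). { apply Hlub. intros s [Hs1 Hs2]. apply Rnot_lt_le. intros Hsr.
        generalize (Hs2 r ltac:(lra) p). lra. }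
      lra. }
    destruct (Classical_Prop.classic (forall p, w p tau < 0)) as [CA|CB].
    - destruct (Req_dec tau t1) as [E|Hne]. { subst tau. exact CA. }
      exfalso.
      destruct (continuity_ab_maj (fun p => w p tau) 0 1) as [pm [Hpm Hpm1]]. lra.
      { intros c _. apply cont2_p. apply wc. lra. }
      set (eta := - w pm tau).
      assert (Heta : 0 < eta) by (unfold eta; generalize (CA pm); lra).
      destruct (unif_t w tau eta Heta) as [d [Hd0 Hdd]].
      { intros p _. apply wc. lra. }
      set (s := Rmin (tau + d / 2) t1).
      assert (Hs : tau < s). { unfold s. apply Rmin_glb_lt; lra. }
      assert (Gs : G s).
      { split. split. lra. apply Rmin_r. intros r Hr p.
        destruct (Rtotal_order r tau) as [Hr1|[Hr1|Hr1]].
        - apply F1. lra.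
        - subst r. apply CA.
        - destruct (wper p r) as [q [Hq E]]. rewrite E.
          assert (Hrd : Rabs (r - tau) < d).
          { rewrite Rabs_pos_eq by lra. assert (r <= tau + d / 2).
            { apply Rle_trans with s. lra. apply Rmin_l. } lra. }
          generalize (Hdd q Hq r Hrd) (Hpm q Hq). intros A B. apply Rabs_def2 in A.
          unfold eta in *. lra. }
      generalize (Hub s Gs). lra.
    - exfalso. destruct (Classical_Pred_Type.not_all_ex_not _ _ CB) as [p0 Hp0].
      apply Rnot_lt_le in Hp0.
      assert (Htaupos : 0 < tau).
      { destruct Htau0 as [H|H]; auto. subst tau. generalize (proj2 G0 0 ltac:(lra) p0). lra. }
      destruct (continuity_ab_maj (fun p => w p tau) 0 1) as [pm [Hpm Hpm1]]. lra.
      { intros c _. apply cont2_p. apply wc. lra. }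
      assert (Hglob : forall q, w q tau <= w pm tau).
      { intros q. destruct (wper q tau) as [q' [Hq' E]]. rewrite E. apply Hpm; auto. }
      assert (Hwpm : 0 <= w pm tau) by (generalize (Hglob p0); lra).
      assert (Hex := exp_pos (- K * tau)).
      assert (Humax : forall q, u q tau <= u pm tau).
      { intros q. generalize (Hglob q). unfold w. intros H.
        apply (Rmult_le_reg_l (exp (- K * tau))); auto. lra. }
      assert (Hupos : 0 <= u pm tau).
      { unfold w in Hwpm. apply Rnot_lt_le. intros Hn.
        assert (exp (- K * tau) * u pm tau < 0) by nra.
        nra. }
      assert (HdT := Hmax pm tau ltac:(lra) Humax Hupos).
      set (l := - K * exp (- K * tau) * u pm tau + exp (- K * tau) * dT u pm tau - (M + 1)).
      assert (Hl : is_derive (fun s => w pm s) tau l).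
      { unfold w, l. auto_derive. apply Hd; lra. unfold dT. ring. }
      assert (He1 : exp (- K * tau) <= 1).
      { replace (- K * tau) with (- (K * tau)) by ring. apply exp_neg_le1. nra. }
      assert (Hl1 : l <= -1) by (unfold l; nra).
      destruct (deriv_lim _ _ _ Hl (1/2)) as [d Hd']. lra.
      set (h := - Rmin (d / 2) (tau / 2)).
      assert (Hd0 := cond_pos d).
      assert (Hh1 : h < 0). { unfold h. apply Ropp_lt_gt_0_contravar. apply Rmin_glb_lt; lra. }
      assert (Hh2 : - h <= tau / 2). { unfold h. rewrite Ropp_involutive. apply Rmin_r. }
      assert (Hh3 : - h <= d / 2). { unfold h. rewrite Ropp_involutive. apply Rmin_l. }
      assert (H1 := Hd' h ltac:(lra) ltac:(rewrite Rabs_left by lra; lra)).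
      apply Rabs_def2 in H1. destruct H1 as [H1 H2].
      assert (Hq : (w pm (tau + h) - w pm tau) / h < 0) by lra.
      assert (EQ : w pm (tau + h) - w pm tau = ((w pm (tau + h) - w pm tau) / h) * h) by (field; lra).
      assert (Hw2 : w pm (tau + h) < 0) by (apply F1; lra).
      nra.
  }
  exists (exp (K * T) * (C0 + 1 + (M + 1) * T)). intros p t Ht.
  assert (Hw := claim t Ht p). unfold w in Hw.
  assert (E : u p t = exp (K * t) * (exp (- K * t) * u p t)).
  { rewrite <- Rmult_assoc, <- exp_plus. replace (K * t + - K * t) with 0 by ring. rewrite exp_0. ring. }
  assert (Hmono : exp (K * t) <= exp (K * T)).
  { destruct (Rle_lt_or_eq_dec (K * t) (K * T)) as [H|H]. nra. left. apply exp_increasing; auto.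
    rewrite H. lra. }
  assert (Hpos := exp_pos (K * t)).
  rewrite E.
  apply Rle_trans with (exp (K * t) * (C0 + 1 + (M + 1) * t)). nra.
  apply Rmult_le_compat; nra.
Qed.

Lemma isd_mult (f g : R -> R) x df dg : is_derive f x df -> is_derive g x dg ->
  is_derive (fun y => f y * g y) x (df * g x + f x * dg).
Proof. intros H1 H2. apply (is_derive_mult f g x df dg H1 H2). intros; apply Rmult_comm. Qed.

Lemma isd_plus (f g : R -> R) x df dg : is_derive f x df -> is_derive g x dg ->
  is_derive (fun y => f y + g y) x (df + dg).
Proof. intros H1 H2. apply (is_derive_plus f g x df dg H1 H2). Qed.

Lemma isd_eq (f : R -> R) (x l lp : R) : is_derive f x l -> l = lp -> is_derive f x lp.
Proof. intros H E; subst; auto. Qed.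

Inductive ex := EV (i : nat) | EC (c : R) | EA (a b : ex) | EM (a b : ex).

Fixpoint ev (ps : nat -> R -> R -> R) (e : ex) (p t : R) : R :=
  match e with
  | EV i => ps i p t
  | EC c => c
  | EA a b => ev ps a p t + ev ps b p t
  | EM a b => ev ps a p t * ev ps b p t
  end.

Fixpoint Dx (e : ex) : ex :=
  match e with
  | EV i => EV (S i)
  | EC c => EC 0
  | EA a b => EA (Dx a) (Dx b)
  | EM a b => EA (EM (Dx a) b) (EM a (Dx b))
  end.

Fixpoint allv (P : nat -> Prop) (e : ex) : Prop :=
  match e with
  | EV i => P i
  | EC _ => True
  | EA a b | EM a b => allv P a /\ allv P b
  end.

Lemma ev_derive ps G e p t :
  (forall i, ex_derive (fun q => ps i q t) p) ->
  (forall i, Derive (fun q => ps i q t) p = G * ps (S i) p t) ->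
  is_derive (fun q => ev ps e q t) p (G * ev ps (Dx e) p t).
Proof. intros H1 H2. induction e; simpl.
  - rewrite <- H2. apply Derive_correct. auto.
  - apply (isd_eq _ _ 0). apply (is_derive_const c p). ring.
  - apply (isd_eq _ _ (G * ev ps (Dx e1) p t + G * ev ps (Dx e2) p t)).
    apply (isd_plus (fun q => ev ps e1 q t) (fun q => ev ps e2 q t)); auto. ring.
  - apply (isd_eq _ _ (G * ev ps (Dx e1) p t * ev ps e2 p t + ev ps e1 p t * (G * ev ps (Dx e2) p t))).
    apply (isd_mult (fun q => ev ps e1 q t) (fun q => ev ps e2 q t)); auto. ring.
Qed.

Lemma allv_mono (P Q : nat -> Prop) e : (forall i, P i -> Q i) -> allv P e -> allv Q e.
Proof. intros H. induction e; simpl; intros; try tauto; auto. Qed.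

Lemma allv_D n e : allv (fun i => (i < n)%nat) e -> allv (fun i => (i < S n)%nat) (Dx e).
Proof. induction e; simpl; intros H; auto.
  - lia.
  - destruct H; split; auto.
  - destruct H as [A B]. assert (A' := allv_mono (fun i => (i < n)%nat) (fun i => (i < S n)%nat) _ ltac:(intros i Hi; cbv beta in *; lia) A).
    assert (B' := allv_mono (fun i => (i < n)%nat) (fun i => (i < S n)%nat) _ ltac:(intros i Hi; cbv beta in *; lia) B).
    repeat split; auto.
Qed.

Lemma ev_bound ps (P : nat -> Prop) (Dm : R -> R -> Prop) e :
  (forall i, P i -> exists M, forall p t, Dm p t -> Rabs (ps i p t) <= M) ->
  allv P e -> exists M, forall p t, Dm p t -> Rabs (ev ps e p t) <= M.
Proof. intros H. induction e; simpl; intros Ha.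
  - apply H; auto.
  - exists (Rabs c). intros; apply Rle_refl.
  - destruct Ha as [A B]. destruct (IHe1 A) as [M1 H1], (IHe2 B) as [M2 H2].
    exists (M1 + M2). intros p t Hd. eapply Rle_trans. apply Rabs_triang.
    generalize (H1 p t Hd) (H2 p t Hd); lra.
  - destruct Ha as [A B]. destruct (IHe1 A) as [M1 H1], (IHe2 B) as [M2 H2].
    exists (M1 * M2). intros p t Hd. rewrite Rabs_mult.
    apply Rmult_le_compat; auto using Rabs_pos.
Qed.

Definition psi X Y (n : nat) := dxi_n X Y n (ca_curv X Y).


Lemma Sm_cr1 U X Y : open2 U -> Sm U X -> Sm U Y -> Sm U (cross_C_Cp X Y).
Proof. intros HU SX SY k. unfold cross_C_Cp.
  apply Ck_minus; auto; apply Ck_mult; auto; apply Sm_dP; auto. Qed.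

Lemma Sm_cr2 U X Y : open2 U -> Sm U X -> Sm U Y -> Sm U (cross_Cp_Cpp X Y).
Proof. intros HU SX SY k. unfold cross_Cp_Cpp.
  apply Ck_minus; auto; apply Ck_mult; auto; repeat apply Sm_dP; auto. Qed.

Definition Good U X Y := open2 U /\ Sm U X /\ Sm U Y /\
  (forall p t, U p t -> cross_C_Cp X Y p t <> 0) /\
  (forall p t, U p t -> 0 < cross_Cp_Cpp X Y p t / cross_C_Cp X Y p t).

Lemma g_pos U X Y p t : Good U X Y -> U p t -> 0 < ca_metric X Y p t.
Proof. intros [HU [SX [SY [H1 H2]]]] Hu. unfold ca_metric. apply sqrt_lt_R0. auto. Qed.

Lemma Sm_g U X Y : Good U X Y -> Sm U (ca_metric X Y).
Proof. intros G. destruct G as [HU [SX [SY [H1 H2]]]]. intros k. unfold ca_metric.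
  apply Ck_sqrt; auto. apply Ck_div; auto. apply Sm_cr2; auto. apply Sm_cr1; auto. Qed.

Lemma Sm_dxi U X Y f : Good U X Y -> Sm U f -> Sm U (dxi X Y f).
Proof. intros G Sf k. assert (G' := G). destruct G as [HU [SX [SY [H1 H2]]]]. unfold dxi.
  apply Ck_div; auto. intros p t Hu. generalize (g_pos U X Y p t G' Hu). lra.
  apply Sm_dP; auto. apply Sm_g; auto. Qed.

Lemma Sm_phi U X Y : Good U X Y -> Sm U (ca_curv X Y).
Proof. intros G k. assert (G' := G). destruct G as [HU [SX [SY [H1 H2]]]]. unfold ca_curv.
  apply Ck_div; auto.
  - intros p t Hu. assert (Hg := g_pos U X Y p t G' Hu).
    replace (dxi X Y X p t * Y p t - dxi X Y Y p t * X p t) with (- cross_C_Cp X Y p t / ca_metric X Y p t).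
    + intros E. apply (H1 p t Hu). apply (Rmult_eq_reg_r (/ ca_metric X Y p t)).
      2: apply Rinv_neq_0_compat; lra. lra.
    + unfold dxi, cross_C_Cp. field. lra.
  - apply Ck_minus; auto; apply Ck_mult; auto; repeat (apply Sm_dxi; auto).
  - apply Ck_minus; auto; apply Ck_mult; auto; repeat (apply Sm_dxi; auto).
Qed.

Lemma psi_S X Y n : psi X Y (S n) = dxi X Y (psi X Y n).
Proof. reflexivity. Qed.

Lemma Sm_psi U X Y n : Good U X Y -> Sm U (psi X Y n).
Proof. intros G. induction n. apply Sm_phi; auto. rewrite psi_S. apply Sm_dxi; auto. Qed.

Lemma dP_psi U X Y n p t : Good U X Y -> U p t ->
  Derive (fun q => psi X Y n q t) p = ca_metric X Y p t * psi X Y (S n) p t.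
Proof. intros G Hu. assert (Hg := g_pos U X Y p t G Hu). rewrite psi_S. unfold dxi, dP.
  field. lra. Qed.

Lemma step U X Y n E t :
  Good U X Y -> (forall p, U p t) ->
  (forall p, dT (ca_metric X Y) p t / ca_metric X Y p t = / 2 * (ca_curv X Y p t) ^ 2) ->
  (forall q, dT (psi X Y n) q t = ev (psi X Y) E q t) ->
  forall p, dT (psi X Y (S n)) p t =
     ev (psi X Y) (Dx E) p t - / 2 * (psi X Y 0 p t) ^ 2 * psi X Y (S n) p t.
Proof. intros G HUt Hg HE p. assert (Hu := HUt p). assert (G' := G).
  destruct G' as [HU [SX [SY [H1 H2]]]].
  assert (Gp := g_pos U X Y p t G Hu).
  assert (Sn := Sm_psi U X Y n G).
  assert (Sg := Sm_g U X Y G).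
  change (dT (psi X Y (S n)) p t) with (Derive (fun s => dP (psi X Y n) p s / ca_metric X Y p s) t).
  erewrite is_derive_unique.
  2: { apply is_derive_div. apply Derive_correct. apply (Sm_pw U (dP (psi X Y n)) p t); auto. apply Sm_dP; auto.
       apply Derive_correct. apply (Sm_pw U (ca_metric X Y) p t); auto. lra. }
  replace (Derive (dP (psi X Y n) p) t) with (dT (dP (psi X Y n)) p t) by reflexivity.
  replace (Derive (ca_metric X Y p) t) with (dT (ca_metric X Y) p t) by reflexivity.
  rewrite (Schwarz_Sm U (psi X Y n) p t HU Sn Hu).
  assert (E1 : dP (dT (psi X Y n)) p t = ca_metric X Y p t * ev (psi X Y) (Dx E) p t).
  { unfold dP. rewrite (Derive_ext _ (fun q => ev (psi X Y) E q t)) by auto.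
    apply is_derive_unique. apply ev_derive.
    - intros i. apply (Sm_pw U (psi X Y i) p t); auto. apply Sm_psi; auto.
    - intros i. apply (dP_psi U); auto. }
  rewrite E1.
  assert (E2 : dP (psi X Y n) p t = ca_metric X Y p t * psi X Y (S n) p t) by (apply (dP_psi U); auto).
  rewrite E2.
  assert (E3 : dT (ca_metric X Y) p t = / 2 * (ca_curv X Y p t) ^ 2 * ca_metric X Y p t).
  { rewrite <- (Hg p). field. lra. }
  rewrite E3. change (psi X Y 0 p t) with (ca_curv X Y p t). field. lra.
Qed.

Definition shape (c : R) (n : nat) (R0 : ex) : ex :=
  EA (EM (EC (/2)) (EV (S (S n))))
     (EA (EM (EA (EC 2) (EM (EC (- c)) (EM (EV 0) (EV 0)))) (EV n)) R0).

Lemma ev_D_novar ps e p t : allv (fun i => (i < 0)%nat) e -> ev ps (Dx e) p t = 0.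
Proof. induction e; simpl; intros H; try lia; try ring.
  - destruct H as [A B]. rewrite IHe1, IHe2 by auto. ring.
  - destruct H as [A B]. rewrite IHe1, IHe2 by auto. ring.
Qed.

Lemma evol U X Y T :
  Good U X Y -> (forall p t, 0 <= t < T -> U p t) ->
  (forall p t, 0 <= t < T ->
     dT (ca_metric X Y) p t / ca_metric X Y p t = / 2 * (ca_curv X Y p t) ^ 2) ->
  (forall p t, 0 <= t < T ->
     dT (ca_curv X Y) p t =
       / 2 * dxi X Y (dxi X Y (ca_curv X Y)) p t
       - / 2 * (ca_curv X Y p t) ^ 3 + 2 * ca_curv X Y p t) ->
  forall n, exists c R0, 0 <= c /\ allv (fun i => (i < n)%nat) R0 /\
    forall p t, 0 <= t < T -> dT (psi X Y n) p t = ev (psi X Y) (shape c n R0) p t.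
Proof. intros G HUt Hg Hphi n. induction n.
  - exists (/2), (EC 0). split. lra. split. simpl; auto.
    intros p t Ht. unfold shape. cbn [ev]. change (dT (psi X Y 0) p t) with (dT (ca_curv X Y) p t). rewrite (Hphi p t Ht).
    change (psi X Y 0 p t) with (ca_curv X Y p t).
    change (psi X Y 2 p t) with (dxi X Y (dxi X Y (ca_curv X Y)) p t). ring.
  - destruct IHn as [c [R0 [Hc [HR Heq]]]].
    assert (Hst : forall p t, 0 <= t < T -> dT (psi X Y (S n)) p t =
       ev (psi X Y) (Dx (shape c n R0)) p t - / 2 * (psi X Y 0 p t) ^ 2 * psi X Y (S n) p t).
    { intros p t Ht. apply (step U); [exact G| intros q; apply HUt; auto | intros q; apply Hg; auto | intros q; apply Heq; auto]. }
    destruct n as [|m].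
    + exists (3 * c + /2), (EC 0). split. lra. split. simpl; auto.
      intros p t Ht. rewrite (Hst p t Ht). unfold shape. cbn [ev Dx].
      rewrite (ev_D_novar _ R0 p t HR). ring.
    + exists (c + /2), (EA (EM (EM (EC (- c)) (EA (EM (EV 1) (EV 0)) (EM (EV 0) (EV 1)))) (EV (S m))) (Dx R0)).
      split. lra. split.
      { simpl. split. repeat split; lia. apply allv_D; auto. }
      intros p t Ht. rewrite (Hst p t Ht). unfold shape. cbn [ev Dx]. ring.
Qed.

Lemma ext_max U X Y n t p : Good U X Y -> (forall q, U q t) ->
  (forall q, psi X Y n q t <= psi X Y n p t) -> psi X Y (S (S n)) p t <= 0.
Proof. intros G HU Hm. assert (Hu := HU p). assert (Gp := g_pos U X Y p t G Hu).
  destruct (max1d (fun q => psi X Y n q t) (fun q => ca_metric X Y q t * psi X Y (S n) q t) p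
    (Derive (fun q => ca_metric X Y q t) p * psi X Y (S n) p t +
     ca_metric X Y p t * Derive (fun q => psi X Y (S n) q t) p)) as [A B]; auto.
  - intros q. rewrite <- (dP_psi U X Y n q t G (HU q)). apply Derive_correct.
    apply (Sm_pw U (psi X Y n) q t); auto. apply Sm_psi; auto.
  - apply (isd_mult (fun q => ca_metric X Y q t) (fun q => psi X Y (S n) q t)); apply Derive_correct.
    apply (Sm_pw U (ca_metric X Y) p t); auto. apply Sm_g; auto.
    apply (Sm_pw U (psi X Y (S n)) p t); auto. apply Sm_psi; auto.
  - assert (Z : psi X Y (S n) p t = 0).
    { apply Rmult_integral in A. destruct A; auto. lra. }
    rewrite Z in B.
    rewrite (psi_S X Y (S n)). unfold dxi, dP.
    assert (Derive (fun q => psi X Y (S n) q t) p <= 0) by nra.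
    unfold Rdiv. assert (0 < / ca_metric X Y p t) by (apply Rinv_0_lt_compat; lra). nra.
Qed.

Lemma ext_min U X Y n t p : Good U X Y -> (forall q, U q t) ->
  (forall q, psi X Y n p t <= psi X Y n q t) -> 0 <= psi X Y (S (S n)) p t.
Proof. intros G HU Hm. assert (Hu := HU p). assert (Gp := g_pos U X Y p t G Hu).
  destruct (max1d (fun q => - psi X Y n q t) (fun q => - (ca_metric X Y q t * psi X Y (S n) q t)) p
    (- (Derive (fun q => ca_metric X Y q t) p * psi X Y (S n) p t +
     ca_metric X Y p t * Derive (fun q => psi X Y (S n) q t) p))) as [A B].
  - intros q. rewrite <- (dP_psi U X Y n q t G (HU q)). apply (is_derive_opp (fun q => psi X Y n q t)).
    apply Derive_correct.
    apply (Sm_pw U (psi X Y n) q t); auto. apply Sm_psi; auto.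
  - apply (is_derive_opp (fun q => ca_metric X Y q t * psi X Y (S n) q t)).
    apply (isd_mult (fun q => ca_metric X Y q t) (fun q => psi X Y (S n) q t)); apply Derive_correct.
    apply (Sm_pw U (ca_metric X Y) p t); auto. apply Sm_g; auto.
    apply (Sm_pw U (psi X Y (S n)) p t); auto. apply Sm_psi; auto.
  - intros q. generalize (Hm q). lra.
  - assert (Z : psi X Y (S n) p t = 0).
    { assert (A' : ca_metric X Y p t * psi X Y (S n) p t = 0) by lra.
      apply Rmult_integral in A'. destruct A'; auto. lra. }
    rewrite Z in B.
    rewrite (psi_S X Y (S n)). unfold dxi, dP.
    assert (0 <= Derive (fun q => psi X Y (S n) q t) p) by nra.
    unfold Rdiv. assert (0 < / ca_metric X Y p t) by (apply Rinv_0_lt_compat; lra). nra.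
Qed.

Lemma per_dP f : per f -> per (dP f).
Proof. intros Hf p t. unfold dP, Derive. cbv beta.
  assert (E : (fun h => (f (p + 1 + h) t - f (p + 1) t) / h) = (fun h => (f (p + h) t - f p t) / h)).
  { extensionality h. replace (p + 1 + h) with (p + h + 1) by ring. rewrite !Hf. reflexivity. }
  rewrite E. reflexivity. Qed.

Lemma per_dT f : per f -> per (dT f).
Proof. intros Hf p t. unfold dT. apply Derive_ext. intros; apply Hf. Qed.

Lemma per_psi X Y n : per X -> per Y -> per (psi X Y n).
Proof. intros HX HY.
  assert (P1 : per (cross_C_Cp X Y)).
  { intros p t. unfold cross_C_Cp. rewrite HX, HY, (per_dP X HX), (per_dP Y HY). auto. }
  assert (P2 : per (cross_Cp_Cpp X Y)).
  { intros p t. unfold cross_Cp_Cpp.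
    rewrite (per_dP X HX), (per_dP Y HY), (per_dP _ (per_dP X HX)), (per_dP _ (per_dP Y HY)). auto. }
  assert (Pg : per (ca_metric X Y)).
  { intros p t. unfold ca_metric. rewrite P1, P2. auto. }
  assert (Pd : forall f, per f -> per (dxi X Y f)).
  { intros f Hf p t. unfold dxi. rewrite (per_dP f Hf), Pg. auto. }
  induction n.
  - intros p t. change (psi X Y 0) with (ca_curv X Y). unfold ca_curv.
    rewrite (Pd _ (Pd _ HX)), (Pd _ (Pd _ HY)), (Pd _ HX), (Pd _ HY), HX, HY. auto.
  - rewrite psi_S. apply Pd; auto.
Qed.

Lemma bounded_all U X Y T : 0 < T -> Good U X Y -> (forall p t, 0 <= t < T -> U p t) ->
  per X -> per Y ->
  (forall p t, 0 <= t < T ->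
     dT (ca_metric X Y) p t / ca_metric X Y p t = / 2 * (ca_curv X Y p t) ^ 2) ->
  (forall p t, 0 <= t < T ->
     dT (ca_curv X Y) p t =
       / 2 * dxi X Y (dxi X Y (ca_curv X Y)) p t
       - / 2 * (ca_curv X Y p t) ^ 3 + 2 * ca_curv X Y p t) ->
  forall n, exists M, forall p t, 0 <= t < T -> Rabs (psi X Y n p t) <= M.
Proof. intros HT G HUt HX HY Hg Hphi.
  assert (strong : forall N n, (n < N)%nat -> exists M, forall p t, 0 <= t < T -> Rabs (psi X Y n p t) <= M).
  2: { intros n. apply (strong (S n)). lia. }
  induction N. intros; lia.
  intros n Hn.
  destruct (evol U X Y T G HUt Hg Hphi n) as [c [R0 [Hc [HR Heq]]]].
  destruct (ev_bound (psi X Y) (fun i => (i < n)%nat) (fun p t => 0 <= t < T) R0) as [MR HMR]; auto.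
  { intros i Hi. apply IHN. lia. }
  set (M := Rmax MR 0).
  assert (HM0 : 0 <= M) by apply Rmax_r.
  assert (HMR' : forall p t, 0 <= t < T -> Rabs (ev (psi X Y) R0 p t) <= M).
  { intros p t Ht. generalize (HMR p t Ht) (Rmax_l MR 0). unfold M. lra. }
  assert (Sn := Sm_psi U X Y n G).
  destruct (maxprin T 2 M (psi X Y n)) as [B1 HB1]; auto; try lra.
  - intros p t Ht. apply (Sm_pw U _ p t Sn); auto.
  - apply per_psi; auto.
  - intros p t Ht. apply (Sm_pw U _ p t Sn); auto. apply HUt; lra.
  - intros p t Ht Hmax Hpos. rewrite (Heq p t ltac:(lra)). unfold shape. cbn [ev].
    assert (A := ext_max U X Y n t p G ltac:(intros q; apply HUt; lra) Hmax).
    assert (B := HMR' p t ltac:(lra)). apply Rabs_le_between in B; destruct B as [B B'].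
    assert (0 <= c * (psi X Y 0 p t * psi X Y 0 p t) * psi X Y n p t).
    { apply Rmult_le_pos; auto. apply Rmult_le_pos; auto. nra. }
    nra.
  - destruct (maxprin T 2 M (fun p t => - psi X Y n p t)) as [B2 HB2]; auto; try lra.
    + intros p t Ht. apply cont2_opp. apply (Sm_pw U _ p t Sn); auto.
    + intros p t. generalize (per_psi X Y n HX HY p t). intros E. rewrite E. auto.
    + intros p t Ht. apply (ex_derive_opp (fun s => psi X Y n p s)). apply (Sm_pw U _ p t Sn); auto. apply HUt; lra.
    + intros p t Ht Hmax Hpos. assert (E : dT (fun p t => - psi X Y n p t) p t = - dT (psi X Y n) p t) by (unfold dT; apply Derive_opp). rewrite E.
      rewrite (Heq p t ltac:(lra)). unfold shape. cbn [ev].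
      assert (A := ext_min U X Y n t p G ltac:(intros q; apply HUt; lra) ltac:(intros q; generalize (Hmax q); lra)).
      assert (B := HMR' p t ltac:(lra)). apply Rabs_le_between in B; destruct B as [B B'].
      assert (0 <= c * (psi X Y 0 p t * psi X Y 0 p t) * (- psi X Y n p t)).
      { apply Rmult_le_pos; auto. apply Rmult_le_pos; auto. nra. }
      nra.
    + exists (Rmax B1 B2). intros p t Ht. generalize (HB1 p t Ht) (HB2 p t Ht) (Rmax_l B1 B2) (Rmax_r B1 B2).
      intros. apply Rabs_le. lra.
Qed.

Definition rat X Y p t := cross_Cp_Cpp X Y p t / cross_C_Cp X Y p t.

Lemma open2_V (d T : R) : open2 (fun _ t => - d < t < T).
Proof. intros p t [H1 H2].
  assert (Hp : 0 < Rmin (t + d) (T - t)) by (apply Rmin_glb_lt; lra).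
  exists (mkposreal _ Hp). intros u v _ Hv. simpl in Hv. apply Rabs_def2 in Hv.
  generalize (Rmin_l (t + d) (T - t)) (Rmin_r (t + d) (T - t)). lra. Qed.

Lemma cont_rat U X Y p t : open2 U -> Sm U X -> Sm U Y -> U p t -> cross_C_Cp X Y p t <> 0 ->
  cont2 (rat X Y) p t.
Proof. intros HU SX SY Hu Hnz. unfold rat, Rdiv.
  apply (cont2_mult (cross_Cp_Cpp X Y) (fun p t => / cross_C_Cp X Y p t)).
  apply (Ck_cont U 0); auto. apply Sm_cr2; auto.
  apply cont2_inv; auto. apply (Ck_cont U 0); auto. apply Sm_cr1; auto. Qed.

Lemma lin_cont a s : continuous (fun s : R => s * a) s.
Proof. apply (ex_derive_continuous (fun s : R => s * a)). auto_derive. auto. Qed.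

Lemma sign_const U X Y T : 0 < T -> open2 U -> Sm U X -> Sm U Y ->
  (forall p t, 0 <= t < T -> U p t) ->
  (forall p t, 0 <= t < T -> cross_C_Cp X Y p t <> 0) ->
  (forall p t, 0 <= t < T -> rat X Y p t <> 0) ->
  forall p t, 0 <= t < T -> (0 < rat X Y 0 0 -> 0 < rat X Y p t) /\ (rat X Y 0 0 < 0 -> rat X Y p t < 0).
Proof. intros HT HU SX SY HUt H1 Hnz p t Ht.
  assert (Hc : forall s, 0 <= s <= 1 -> continuity_pt (fun s => rat X Y (s * p) (s * t)) s).
  { intros s Hs. apply (proj2 (continuity_pt_filterlim _ _)).
    apply (continuous_comp_2 (fun s => s * p) (fun s => s * t) (rat X Y)).
    apply lin_cont. apply lin_cont.
    apply (cont_rat U); auto; [apply HUt|apply H1]; split; nra. }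
  assert (E0 : rat X Y (0 * p) (0 * t) = rat X Y 0 0) by (rewrite !Rmult_0_l; auto).
  assert (E1 : rat X Y (1 * p) (1 * t) = rat X Y p t) by (rewrite !Rmult_1_l; auto).
  split; intros H0.
  - destruct (Rlt_or_le 0 (rat X Y p t)) as [H|H]; auto. exfalso.
    assert (H' : rat X Y p t < 0) by (destruct H; auto; exfalso; apply (Hnz p t Ht); auto).
    destruct (Ranalysis5.IVT_interv (fun s => - rat X Y (s * p) (s * t)) 0 1) as [z [Hz Ez]].
    { intros a Ha. apply continuity_pt_opp. apply Hc; auto. }
    lra. simpl. lra. simpl. lra.
    apply (Hnz (z * p) (z * t)). split; nra. lra.
  - destruct (Rlt_or_le (rat X Y p t) 0) as [H|H]; auto. exfalso.
    assert (H' : 0 < rat X Y p t) by (destruct H; auto; exfalso; apply (Hnz p t Ht); auto).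
    destruct (Ranalysis5.IVT_interv (fun s => rat X Y (s * p) (s * t)) 0 1) as [z [Hz Ez]].
    { intros a Ha. apply Hc; auto. }
    lra. simpl. lra. simpl. lra.
    apply (Hnz (z * p) (z * t)). split; nra. lra.
Qed.

Lemma psi_zero X Y n p t : ca_metric X Y p t = 0 -> psi X Y n p t = 0.
Proof. intros Hg. destruct n.
  - change (psi X Y 0 p t) with (ca_curv X Y p t). unfold ca_curv, dxi. rewrite Hg.
    unfold Rdiv. rewrite Rinv_0. rewrite !Rmult_0_r, !Rmult_0_l, Rminus_0_r, Rinv_0. ring.
  - rewrite psi_S. unfold dxi. rewrite Hg. unfold Rdiv. rewrite Rinv_0. ring.
Qed.

Theorem lemma3p3 (T lambda delta : R) (X Y : R -> R -> R) :
  0 < T ->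
  0 < delta ->
  smooth_on (fun _ t => - delta < t < T) X ->
  smooth_on (fun _ t => - delta < t < T) Y ->
  (forall p t, X (p + 1) t = X p t) ->
  (forall p t, Y (p + 1) t = Y p t) ->
  (forall p t, 0 <= t < T -> cross_C_Cp X Y p t <> 0) ->
  (forall p t, 0 <= t < T -> cross_Cp_Cpp X Y p t <> 0) ->
  (forall p t, 0 <= t < T ->
     dT X p t = (lambda + int_curv X Y p t) * X p t
                + ca_curv X Y p t / 2 * dxi X Y X p t) ->
  (forall p t, 0 <= t < T ->
     dT Y p t = (lambda + int_curv X Y p t) * Y p t
                + ca_curv X Y p t / 2 * dxi X Y Y p t) ->
  (forall p t, 0 <= t < T ->
     dT (ca_metric X Y) p t / ca_metric X Y p t = / 2 * (ca_curv X Y p t) ^ 2) ->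
  (forall p t, 0 <= t < T ->
     dT (ca_curv X Y) p t =
       / 2 * dxi X Y (dxi X Y (ca_curv X Y)) p t
       - / 2 * (ca_curv X Y p t) ^ 3 + 2 * ca_curv X Y p t) ->
  forall n : nat, exists M : R, forall p t, 0 <= t < T ->
    Rabs (dxi_n X Y n (ca_curv X Y) p t) <= M.
Proof. intros HT Hd HsX HsY HX HY Hc1 Hc2 _ _ Hg Hphi n.
  set (V := fun (_ : R) t => - delta < t < T).
  assert (HV : open2 V) by apply open2_V.
  assert (SX : Sm V X) by (intros k; exact (smooth_Ck V X HsX k nil)).
  assert (SY : Sm V Y) by (intros k; exact (smooth_Ck V Y HsY k nil)).
  assert (HVt : forall p t, 0 <= t < T -> V p t) by (intros p t Ht; unfold V; lra).
  assert (Hnz : forall p t, 0 <= t < T -> rat X Y p t <> 0).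
  { intros p t Ht E. unfold rat in E. apply (Hc2 p t Ht).
    apply (Rmult_eq_reg_r (/ cross_C_Cp X Y p t)). rewrite Rmult_0_l. exact E.
    apply Rinv_neq_0_compat. auto. }
  assert (Hs := sign_const V X Y T HT HV SX SY HVt Hc1 Hnz).
  change (exists M, forall p t, 0 <= t < T -> Rabs (psi X Y n p t) <= M).
  destruct (Rtotal_order (rat X Y 0 0) 0) as [Hn|[Hz|Hp]].
  - exists 0. intros p t Ht. rewrite psi_zero. rewrite Rabs_R0; lra.
    unfold ca_metric. apply sqrt_neg_0. left. apply (proj2 (Hs p t Ht)); auto.
  - exfalso. apply (Hnz 0 0); auto. lra.
  - set (U := fun p t => - delta < t < T /\ cross_C_Cp X Y p t <> 0 /\ 0 < rat X Y p t).
    assert (HU : open2 U).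
    { intros p t [Hv [H1 H2]].
      assert (L1 := loc_of2 _ p t (HV p t Hv)).
      assert (L2 : locally (p, t) (fun z : R * R =>
          0 < (fun p t => cross_C_Cp X Y p t * cross_C_Cp X Y p t) (fst z) (snd z))).
      { apply (cont2_pos (fun p t => cross_C_Cp X Y p t * cross_C_Cp X Y p t)). apply cont2_mult; apply (Ck_cont V 0); auto; apply Sm_cr1; auto.
        assert (0 < cross_C_Cp X Y p t * cross_C_Cp X Y p t).
        { destruct (Rlt_or_le 0 (cross_C_Cp X Y p t)). nra.
          destruct H. nra. contradiction. }
        auto. }
      assert (L3 : locally (p, t) (fun z : R * R => 0 < rat X Y (fst z) (snd z))).
      { apply (cont2_pos (rat X Y)); auto. apply (cont_rat V); auto. }
      apply (loc2_of U). generalize (filter_and _ _ L1 (filter_and _ _ L2 L3)).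
      apply filter_imp. intros z [A [B C]]. split; auto. split; auto.
      intros E. simpl in B. rewrite E in B. lra. }
    assert (G : Good U X Y).
    { split; auto. split; [|split; [|split]].
      - intros k. apply (Ck_set U V); [intros p t [A _]; exact A | exact (SX k)].
      - intros k. apply (Ck_set U V); [intros p t [A _]; exact A | exact (SY k)].
      - intros p t [_ [A _]]; auto.
      - intros p t [_ [_ A]]; auto. }
    assert (HUt : forall p t, 0 <= t < T -> U p t).
    { intros p t Ht. split. lra. split. auto. apply (proj1 (Hs p t Ht)); auto. }
    apply (bounded_all U X Y T); auto.
Qed.
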